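(* Let $\mathbb{F}$ be a field of characteristic $0$, let $V\subseteq\{0,1\}^n\subseteq\mathbb{F}^n$, and let $\prec_{\mathrm{lex}}$ be the lexicographic order on monomials of $\mathbb{F}[x_1,\dots,x_n]$ induced by $x_1\succ\dots\succ x_n$. Then for every monomial $m=x^{\alpha}$, $R^{\prec_{\mathrm{lex}}}_{I(V)}(m)\in\mathbb{Z}[x_1,\dots,x_n]$.
   Context: $I(V)$ is the ideal of all polynomials in $\mathbb{F}[x_1,\dots,x_n]$ vanishing on every point of $V$ (the whole ring if $V=\emptyset$). In the lexicographic order, $x^{\alpha}\succ x^{\beta}$ iff the first nonzero entry of $\alpha-\beta\in\mathbb{Z}^n$ is positive. A polynomial $p$ is reducible modulo an ideal $I$ if some $q\in I$ has the same leading ($\prec$-largest) monomial as $p$; every $p$ decomposes uniquely as $p=q+r$ with $q\in I$ and $r$ a linear combination of monomials irreducible modulo $I$, and $R^{\prec}_I(p):=r$. *)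

(* Defs.v *)
From HB Require Import structures.
From mathcomp Require Import all_boot all_order all_algebra.
From mathcomp Require Import mpoly.
Set Implicit Arguments. Unset Strict Implicit. Unset Printing Implicit Defensive.
Import Order.TTheory GRing.Theory Num.Theory.
Local Open Scope ring_scope.

(* Lexicographic order on monomials with x_1 > x_2 > ... > x_n
   (variable x_{i+1} is index i : 'I_n):  x^a > x^b  iff the first nonzero
   entry of a - b is positive. *)
Definition lex_gt (n : nat) (a b : 'X_{1..n}) : Prop :=
  exists i : 'I_n, (b i < a i)%N /\ forall j : 'I_n, (j < i)%N -> a j = b j.

Definition lex_lead_is (F : fieldType) (n : nat) (p : {mpoly F[n]})
    (m : 'X_{1..n}) : Prop :=
  m \in msupp p /\ forall m' : 'X_{1..n}, m' \in msupp p -> m' <> m -> lex_gt m m'.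

Definition vanishing_ideal (F : fieldType) (n : nat) (V : ('I_n -> F) -> Prop)
    (p : {mpoly F[n]}) : Prop :=
  forall v, V v -> p.@[v] = 0.

Definition lex_reducible (F : fieldType) (n : nat) (I : {mpoly F[n]} -> Prop)
    (m : 'X_{1..n}) : Prop :=
  exists q, I q /\ lex_lead_is q m.

Definition lex_irreducible_comb (F : fieldType) (n : nat)
    (I : {mpoly F[n]} -> Prop) (r : {mpoly F[n]}) : Prop :=
  forall m, m \in msupp r -> ~ lex_reducible I m.

Definition int_coeffs (F : fieldType) (n : nat) (r : {mpoly F[n]}) : Prop :=
  forall m : 'X_{1..n}, exists z : int, r@_m = z%:~R.

(* Main.v *)
Require Import Defs.
From HB Require Import structures.
From mathcomp Require Import all_boot all_order all_algebra.
From mathcomp Require Import mpoly.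
From Stdlib Require Import ClassicalEpsilon Classical.
Set Implicit Arguments. Unset Strict Implicit. Unset Printing Implicit Defensive.
Import Order.TTheory GRing.Theory Num.Theory.
Local Open Scope ring_scope.

Definition isZ (F : fieldType) (x : F) := exists z : int, x = z%:~R.

Lemma isZ0 (F : fieldType) : isZ (0 : F). Proof. by exists 0; rewrite mulr0z. Qed.
Lemma isZ1 (F : fieldType) : isZ (1 : F). Proof. by exists 1. Qed.
Lemma isZD (F : fieldType) (x y : F) : isZ x -> isZ y -> isZ (x + y).
Proof. by move=> [a ->] [b ->]; exists (a + b); rewrite intrD. Qed.
Lemma isZN (F : fieldType) (x : F) : isZ x -> isZ (- x).
Proof. by move=> [a ->]; exists (- a); rewrite intrN. Qed.
Lemma isZB (F : fieldType) (x y : F) : isZ x -> isZ y -> isZ (x - y).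
Proof. by move=> hx hy; apply: isZD => //; apply: isZN. Qed.
Lemma isZM (F : fieldType) (x y : F) : isZ x -> isZ y -> isZ (x * y).
Proof. by move=> [a ->] [b ->]; exists (a * b); rewrite intrM. Qed.
Lemma isZX (F : fieldType) (x : F) k : isZ x -> isZ (x ^+ k).
Proof. by move=> hx; elim: k => [|k IH]; rewrite ?expr0 ?exprS; [apply: isZ1|apply: isZM]. Qed.

Definition vg (F : fieldType) (n : nat) (k : nat) (p : {mpoly F[n]}) :=
  forall m, m \in msupp p -> forall j : 'I_n, (j < k)%N -> m j = 0%N.

Lemma vgD (F : fieldType) n k (p q : {mpoly F[n]}) : vg k p -> vg k q -> vg k (p + q).
Proof.
move=> hp hq m /msuppD_le; rewrite mem_cat => /orP [] hm; [exact: hp|exact: hq].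
Qed.
Lemma vgN (F : fieldType) n k (p : {mpoly F[n]}) : vg k p -> vg k (- p).
Proof. by move=> hp m; rewrite (perm_mem (msuppN p)); apply: hp. Qed.
Lemma vgB (F : fieldType) n k (p q : {mpoly F[n]}) : vg k p -> vg k q -> vg k (p - q).
Proof. by move=> hp hq; apply: vgD => //; apply: vgN. Qed.
Lemma vgM (F : fieldType) n k (p q : {mpoly F[n]}) : vg k p -> vg k q -> vg k (p * q).
Proof.
move=> hp hq m /msuppM_le /allpairsP [[m1 m2] /= [h1 h2 ->]] j hj.
by rewrite mnmDE (hp _ h1 _ hj) (hq _ h2 _ hj).
Qed.
Lemma vg1 (F : fieldType) n k : vg k (1 : {mpoly F[n]}).
Proof. by move=> m; rewrite msupp1 mem_seq1 => /eqP -> j _; rewrite mnm0E. Qed.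
Lemma vgXm (F : fieldType) n k (m : 'X_{1..n}) :
  (forall j : 'I_n, (j < k)%N -> m j = 0%N) -> vg k ('X_[m] : {mpoly F[n]}).
Proof. by move=> h m'; rewrite msuppX mem_seq1 => /eqP ->. Qed.
Lemma vgX (F : fieldType) n k (i : 'I_n) : (k <= i)%N -> vg k ('X_i : {mpoly F[n]}).
Proof.
move=> hi; apply: vgXm => j hj; rewrite mnm1E; case: eqP => // ei.
by move: hj; rewrite -ei ltnNge hi.
Qed.
Lemma vg_prod (F : fieldType) n k (I : Type) (s : seq I) (P : pred I) (f : I -> {mpoly F[n]}) :
  (forall i, P i -> vg k (f i)) -> vg k (\prod_(i <- s | P i) f i).
Proof. by move=> h; apply: big_ind => //; [apply: vg1 | apply: vgM]. Qed.
Lemma vgS (F : fieldType) n k (p : {mpoly F[n]}) : vg k.+1 p -> vg k p.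
Proof. by move=> h m hm j hj; apply: h => //; apply: ltnW. Qed.
Lemma vg0 (F : fieldType) n (p : {mpoly F[n]}) : vg 0 p.
Proof. by []. Qed.

Lemma vg_meval (F : fieldType) n k (p : {mpoly F[n]}) (v w : 'I_n -> F) :
  vg k p -> (forall j : 'I_n, (k <= j)%N -> v j = w j) -> p.@[v] = p.@[w].
Proof.
move=> hp hvw; rewrite !mevalE; apply: eq_big_seq => m hm; congr (_ * _).
apply: eq_bigr => i _; case: (ltnP i k) => hi; first by rewrite (hp _ hm _ hi) !expr0.
by rewrite hvw.
Qed.

Lemma int_meval (F : fieldType) n (p : {mpoly F[n]}) (v : 'I_n -> F) :
  int_coeffs p -> (forall i, v i = 0 \/ v i = 1) -> isZ p.@[v].
Proof.
move=> hp hv; rewrite mevalE; apply: big_ind; [exact: isZ0|exact: isZD|] => m _.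
apply: isZM; first exact: hp.
apply: big_ind; [exact: isZ1|exact: isZM|] => i _; apply: isZX.
by case: (hv i) => ->; [apply: isZ0|apply: isZ1].
Qed.

Definition dec (P : Prop) : bool := if excluded_middle_informative P then true else false.
Lemma decR (P : Prop) : reflect P (dec P).
Proof. by rewrite /dec; case: excluded_middle_informative => h; constructor. Qed.


Lemma coef_sel (F : fieldType) n (s : seq 'X_{1..n}) (P : pred 'X_{1..n})
   (f : 'X_{1..n} -> 'X_{1..n}) (a : 'X_{1..n} -> F) c m0 :
  uniq s -> (forall m, m \in s -> P m -> (f m == c) = (m == m0)) ->
  (\sum_(m <- s | P m) a m *: ('X_[f m] : {mpoly F[n]}))@_c =
    if (m0 \in s) && P m0 then a m0 else 0.
Proof.
move=> us hf; rewrite raddf_sum /= big_mkcond /=.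
rewrite (eq_big_seq (fun m => if m == m0 then (if P m then a m else 0) else 0)); last first.
  move=> m hm /=; case hP: (P m); last by case: eqP.
  by rewrite mcoeffZ mcoeffX (hf _ hm hP); case: eqP; rewrite ?mulr1 ?mulr0.
case hm0: (m0 \in s); last first.
  by rewrite big1_seq //= => m h; case: eqP => // e; move: hm0; rewrite -e h.
rewrite (bigD1_seq m0) //= eqxx big1 ?addr0 //.
by move=> m /negbTE ->.
Qed.

Lemma mulX_coef (F : fieldType) n (h : {mpoly F[n]}) (kk : 'I_n) c :
  (h * 'X_kk)@_c = if c kk != 0%N then h@_(c - U_(kk))%MM else 0.
Proof.
case: ifP => hc.
  have -> : c = (U_(kk) + (c - U_(kk)))%MM.
    apply/mnmP => i; rewrite mnmDE mnmBE mnm1E.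
    case: eqP => [<-|_]; last by rewrite subn0.
    by rewrite add1n subn1 prednK // lt0n.
  by rewrite mcoeffMX addmC addmK.
apply/eqP; rewrite mcoeff_eq0 (perm_mem (msuppMX _ _)).
apply/mapP => -[m' _ hc']; move: hc; rewrite hc' mnmDE mnm1E eqxx.
by [].
Qed.

Lemma lex_gt_shift n (a b c : 'X_{1..n}) : lex_gt a b -> lex_gt (a + c)%MM (b + c)%MM.
Proof.
move=> [i [hi hj]]; exists i; rewrite !mnmDE ltn_add2r; split => // j hji.
by rewrite !mnmDE hj.
Qed.

Lemma subUK n (kk : 'I_n) (c : 'X_{1..n}) : c kk != 0%N -> (c - U_(kk) + U_(kk))%MM = c.
Proof.
move=> hc; apply/mnmP => i; rewrite mnmDE mnmBE mnm1E.
case: eqP => [<-|_]; last by rewrite subn0 addn0.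
by rewrite addn1 subn1 prednK // lt0n.
Qed.


Definition stdk (F : fieldType) n k (V : ('I_n -> F) -> Prop) (r : {mpoly F[n]}) :=
  forall m, m \in msupp r ->
    ~ (exists q, vg k q /\ vanishing_ideal V q /\ lex_lead_is q m).

Lemma deg_le1 (F : fieldType) n (kk : 'I_n) (V : ('I_n -> F) -> Prop)
  (hV : forall v, V v -> forall i : 'I_n, v i = 0 \/ v i = 1) (r : {mpoly F[n]}) :
  vg kk r -> stdk kk V r -> forall m, m \in msupp r -> (m kk <= 1)%N.
Proof.
move=> hvg hst m hm; rewrite leqNgt; apply/negP => h2.
apply: (hst m hm).
have hne : (m - U_(kk))%MM != m.
  apply/eqP => /mnmP /(_ kk); rewrite mnmBE mnm1E eqxx subn1 => e.
  by move: h2 e; case: (m kk) => // p _ /=; apply: n_Sn.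
exists ('X_[m] - 'X_[(m - U_(kk))%MM]); split; [|split].
- apply: vgB; apply: vgXm => j hj; first exact: hvg.
  rewrite mnmBE (hvg _ hm _ hj) //.
- move=> v hv; rewrite mevalB !mevalX; apply/eqP; rewrite subr_eq0; apply/eqP.
  apply: eq_bigr => i _; rewrite mnmBE mnm1E.
  case: eqP => [<-|_]; last by rewrite subn0.
  case: (hV _ hv kk) => ->; last by rewrite !expr1n.
  rewrite !expr0n; case: (m kk) h2 => [|[|k]] //.
- split.
  + by rewrite mcoeff_msupp mcoeffB !mcoeffX eqxx (negbTE hne) subr0 oner_eq0.
  + move=> m' /msuppB_le; rewrite !msuppX mem_cat !mem_seq1 => /orP [/eqP -> //|/eqP -> _].
    exists kk; rewrite mnmBE mnm1E eqxx; split.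
      by rewrite subn1 prednK ?ltnS // (leq_trans _ h2).
    by move=> j hj; rewrite mnmBE mnm1E; case: eqP => [e|]; [move: hj; rewrite e ltnn|rewrite subn0].
Qed.


Definition delta (F : fieldType) n (k : nat) (b : {ffun 'I_n -> bool}) : {mpoly F[n]} :=
  \prod_(j : 'I_n | (k < j)%N) (if b j then 'X_j else 1 - 'X_j).

Lemma meval_prod (F : fieldType) n (v : 'I_n -> F) (I : Type) (s : seq I) (P : pred I)
  (f : I -> {mpoly F[n]}) : (\prod_(i <- s | P i) f i).@[v] = \prod_(i <- s | P i) (f i).@[v].
Proof. exact: (big_morph (meval v) (mevalM v) (meval1 v)). Qed.

Lemma vg_delta (F : fieldType) n k (b : {ffun 'I_n -> bool}) : vg k.+1 (@delta F n k b).
Proof.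
apply: vg_prod => j hj; case: (b j); first exact: vgX.
by apply: vgB; [apply: vg1|apply: vgX].
Qed.

Lemma delta1 (F : fieldType) n k (b : {ffun 'I_n -> bool}) (v : 'I_n -> F) :
  (forall j : 'I_n, (k < j)%N -> v j = (b j)%:R) -> (@delta F n k b).@[v] = 1.
Proof.
move=> h; rewrite meval_prod big1 // => j hj; rewrite (fun_if (meval v)) mevalB meval1 mevalXU h //.
by case: (b j); rewrite ?subr0.
Qed.

Lemma delta0 (F : fieldType) n k (b : {ffun 'I_n -> bool}) (v : 'I_n -> F) :
  (forall i, v i = 0 \/ v i = 1) ->
  (exists j : 'I_n, (k < j)%N /\ v j <> (b j)%:R) -> (@delta F n k b).@[v] = 0.
Proof.
move=> hv [j [hj hne]]; rewrite meval_prod (bigD1 j) //= (fun_if (meval v)) mevalB meval1 mevalXU.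
case: (b j) hne => /= hne.
  by case: (hv j) => e; [rewrite e mul0r|by []].
by case: (hv j) => e; [by []|rewrite e subrr mul0r].
Qed.


Lemma h_std (F : fieldType) n (kk : 'I_n) (V : ('I_n -> F) -> Prop)
  (hV : forall v, V v -> forall i : 'I_n, v i = 0 \/ v i = 1) (r h : {mpoly F[n]}) :
  stdk kk V r -> (forall c, h@_c = r@_(c + U_(kk))%MM) ->
  stdk kk.+1 (fun v => V v /\ v kk = 1 /\ exists v0, V v0 /\ v0 kk = 0 /\
                  forall j : 'I_n, (kk < j)%N -> v0 j = v j) h.
Proof.
move=> hst hh m hm [q' [hq'vg [hq'V [hq'm hq'lead]]]].
pose S := [set b : {ffun 'I_n -> bool} | dec (exists v0, V v0 /\ v0 kk = 0 /\
   forall j : 'I_n, (kk < j)%N -> v0 j = (b j)%:R)].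
pose chi := \prod_(b in S) (1 - delta F kk b).
pose Q := q' * 'X_kk - q' * chi.
have vgchi : vg kk.+1 chi.
  by apply: vg_prod => b _; apply: vgB; [apply: vg1|apply: vg_delta].
have vgA : vg kk.+1 (q' * chi) by apply: vgM.
have vgQ : vg kk Q.
  by apply: vgB; [apply: vgM; [apply: vgS|apply: vgX]|apply: vgS].
have coefQ (c : 'X_{1..n}) : c kk != 0%N -> Q@_c = q'@_(c - U_(kk))%MM.
  move=> hc; rewrite mcoeffB mulX_coef hc.
  have -> : (q' * chi)@_c = 0; last by rewrite subr0.
  apply/eqP; rewrite mcoeff_eq0; apply/negP => hin.
  by move: hc; rewrite (vgA _ hin kk (ltnSn _)) eqxx.
have hmk : m kk = 0%N by apply: (hq'vg _ hq'm kk (ltnSn _)).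
apply: (hst (m + U_(kk))%MM).
  by rewrite mcoeff_msupp -hh -mcoeff_msupp.
exists Q; split; [done|split].
- move=> v hv; rewrite /Q mevalB !mevalM mevalXU.
  case: (hV v hv kk) => hk.
  + pose bv := [ffun j => v j == 1].
    have hbv : forall j : 'I_n, (kk < j)%N -> v j = (bv j)%:R.
      move=> j _; rewrite ffunE; case: (hV v hv j) => ->; last by rewrite eqxx.
      by rewrite eq_sym oner_eq0.
    have bvS : bv \in S.
      by rewrite inE; apply/decR; exists v; split; [done|split].
    rewrite /chi meval_prod (bigD1 bv) //= mevalB meval1 (delta1 hbv) subrr mul0r.
    by rewrite hk !mulr0 subrr.
  + case: (classic (V v /\ v kk = 1 /\ exists v0, V v0 /\ v0 kk = 0 /\
                  forall j : 'I_n, (kk < j)%N -> v0 j = v j)) => hc.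
      by rewrite (hq'V _ hc) !mul0r subrr.
    rewrite /chi meval_prod big1 ?hk ?mulr1 ?subrr // => b hb.
    rewrite mevalB meval1 delta0 ?subr0 //; first exact: hV.
    move: hb; rewrite inE => /decR [v0 [hv0 [hv0k hv0b]]].
    apply: NNPP => hnot; apply: hc; split; [done|split; [done|]].
    exists v0; split; [done|split; [done|]] => j hj.
    rewrite hv0b //; apply: NNPP => hne; apply: hnot; exists j; split => // e.
    by apply: hne; rewrite e.
- split.
    by rewrite mcoeff_msupp coefQ ?(addmK U_(kk) m) -?mcoeff_msupp ?mnmDE ?mnm1E ?eqxx ?addn1.
  move=> m'' hm'' hne; case: (eqVneq (m'' kk) 0%N) => hk.
    exists kk; rewrite mnmDE mnm1E eqxx hk addn1; split => // j hj.
    rewrite mnmDE mnm1E (hq'vg _ hq'm j (ltnW hj)) (vgQ _ hm'' j hj).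
    by case: eqP => // e; move: hj; rewrite e ltnn.
  have hin : (m'' - U_(kk))%MM \in msupp q'.
    by rewrite mcoeff_msupp -coefQ // -mcoeff_msupp.
  have hne' : (m'' - U_(kk))%MM <> m.
    by move=> e; apply: hne; rewrite -e subUK.
  by have := lex_gt_shift U_(kk) (hq'lead _ hin hne'); rewrite subUK.
Qed.


Lemma key (F : fieldType) n d : forall k, (k + d = n)%N ->
  forall (V : ('I_n -> F) -> Prop), (forall v, V v -> forall i : 'I_n, v i = 0 \/ v i = 1) ->
  forall r : {mpoly F[n]}, vg k r -> stdk k V r -> (forall v, V v -> isZ r.@[v]) ->
  int_coeffs r.
Proof.
elim: d => [|d IH] k.
  rewrite addn0 => <- V hV r hvg hst hval.
  have supp0 : forall m, m \in msupp r -> m = 0%MM.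
    by move=> m hm; apply/mnmP => i; rewrite mnm0E; apply: hvg.
  have rC : r = (r@_0%MM)%:MP.
    apply/mpolyP => c; rewrite mcoeffC; case: (eqVneq c 0%MM) => [->|hc]; first by rewrite mulr1.
    rewrite mulr0; apply/memN_msupp_eq0/negP => /supp0 e; by rewrite e eqxx in hc.
  move=> c; case: (eqVneq c 0%MM) => [->|hc]; last first.
    by exists 0; rewrite rC mcoeffC (negbTE hc) mulr0 mulr0z.
  case: (classic (exists v, V v)) => [[v hv]|hnv].
    by have := hval v hv; rewrite {1}rC mevalC.
  case: (eqVneq r@_0%MM 0) => [->|hnz]; first exact: isZ0.
  exfalso; apply: (hst 0%MM); first by rewrite mcoeff_msupp.
  exists 1; split; first exact: vg1.
  split; first by move=> v hv; exfalso; apply: hnv; exists v.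
  split; first by rewrite msupp1 mem_seq1.
  by move=> m'; rewrite msupp1 mem_seq1 => /eqP.
move=> hk V hV r hvg hst hval.
have kn : (k < n)%N by rewrite -hk addnS ltnS leq_addr.
pose kk := Ordinal kn.
have hdeg : forall m, m \in msupp r -> (m kk <= 1)%N := @deg_le1 F n kk V hV r hvg hst.
pose g := \sum_(m <- msupp r | m kk == 0%N) r@_m *: ('X_[(fun m => m) m] : {mpoly F[n]}).
pose h := \sum_(m <- msupp r | m kk != 0%N) r@_m *: ('X_[(fun m => (m - U_(kk))%MM) m] : {mpoly F[n]}).
have gc (c : 'X_{1..n}) : g@_c = if c kk == 0%N then r@_c else 0.
  rewrite /g (@coef_sel _ _ _ _ _ _ c c) //.
  case: (c kk == 0%N); rewrite ?andbT ?andbF //.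
  by case: ifP => // /negbT; rewrite -mcoeff_eq0 => /eqP.
have hc (c : 'X_{1..n}) : h@_c = r@_(c + U_(kk))%MM.
  rewrite /h (@coef_sel _ _ _ _ _ _ c (c + U_(kk))%MM) //; last first.
    by move=> m _ hm; apply/eqP/eqP => [<-|->]; [rewrite subUK|rewrite addmK].
  rewrite mnmDE mnm1E eqxx addn1 andbT.
  by case: ifP => // /negbT; rewrite -mcoeff_eq0 => /eqP.
have rgh : r = g + h * 'X_kk.
  apply/mpolyP => c; rewrite mcoeffD gc mulX_coef hc.
  case: (eqVneq (c kk) 0%N) => hck; first by rewrite /= addr0.
  by rewrite /= add0r subUK.
have vgg : vg k.+1 g.
  move=> c hcin j hj.
  have hck : c kk = 0%N.
    by move: hcin; rewrite mcoeff_msupp gc; case: ifP => [/eqP //|_]; rewrite eqxx.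
  have hin : c \in msupp r by move: hcin; rewrite mcoeff_msupp gc hck eqxx -mcoeff_msupp.
  move: hj; rewrite ltnS leq_eqVlt => /orP [/eqP ej|hj]; last exact: hvg.
  by have -> : j = kk by apply: val_inj.
have vgh : vg k.+1 h.
  move=> c hcin j hj.
  have hin : (c + U_(kk))%MM \in msupp r by rewrite mcoeff_msupp -hc -mcoeff_msupp.
  have := hdeg _ hin; rewrite mnmDE mnm1E eqxx addn1 ltnS leqn0 => /eqP hck0.
  move: hj; rewrite ltnS leq_eqVlt => /orP [/eqP ej|hj].
    by have -> : j = kk by apply: val_inj.
  have := hvg _ hin j hj; rewrite mnmDE mnm1E.
  case: eqP => [e|_]; last by rewrite addn0.
  by move: hj; rewrite -e ltnn.
have eval_r v : r.@[v] = g.@[v] + h.@[v] * v kk by rewrite {1}rgh mevalD mevalM mevalXU.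
have hk1 : (k.+1 + d = n)%N by rewrite addSnnS.
have hint : int_coeffs h.
  apply: (IH k.+1 hk1 _ _ h vgh (@h_std F n kk V hV r h hst hc)).
    by move=> v [hv _]; apply: hV.
  move=> v [hv [hvk [v0 [hv0 [hv0k hagree]]]]].
  have e1 := eval_r v; have e0 := eval_r v0.
  have geq : g.@[v0] = g.@[v] by apply: (vg_meval vgg) => j hj; apply: hagree.
  have -> : h.@[v] = r.@[v] - r.@[v0].
    by rewrite e1 e0 hvk hv0k mulr1 mulr0 addr0 geq addrC addKr.
  by apply: isZB; apply: hval.
have gint : int_coeffs g.
  apply: (IH k.+1 hk1 V hV g vgg).
    move=> m hm [q [hq1 hq2]]; apply: (hst m).
      move: hm; rewrite mcoeff_msupp gc; case: ifP => _; last by rewrite eqxx.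
      by rewrite -mcoeff_msupp.
    by exists q; split; first exact: vgS.
  move=> v hv; have -> : g.@[v] = r.@[v] - h.@[v] * v kk by rewrite eval_r addrK.
  apply: isZB; first exact: hval.
  apply: isZM; first exact: (int_meval hint (hV v hv)).
  by case: (hV v hv kk) => ->; [apply: isZ0|apply: isZ1].
move=> c; rewrite rgh mcoeffD mulX_coef.
apply: isZD; first exact: gint.
by case: ifP => _; [exact: hint|exact: isZ0].
Qed.

Unset Implicit Arguments.
Theorem mainTheorem7 (F : fieldType) (n : nat) (V : ('I_n -> F) -> Prop)
  (hchar : [pchar F] =i pred0)
  (hV : forall v, V v -> forall i : 'I_n, v i = 0 \/ v i = 1)
  (alpha : 'X_{1..n}) (q r : {mpoly F[n]}) :
  vanishing_ideal V q ->
  lex_irreducible_comb (vanishing_ideal V) r ->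
  'X_[alpha] = q + r ->
  int_coeffs r.
Proof.
move=> hq hr e.
apply: (@key F n n 0 (add0n n) V hV r (@vg0 F n r)).
  move=> m hm [q' [_ hq']]; exact: (hr m hm (ex_intro _ q' hq')).
move=> v hv; have -> : r = 'X_[alpha] - q by rewrite e (addrC q) addrK.
rewrite mevalB mevalX (hq v hv) subr0.
apply: big_ind; [exact: isZ1|exact: isZM|] => i _; apply: isZX.
by case: (hV v hv i) => ->; [apply: isZ0|apply: isZ1].
Qed.
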